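(* Let $n,k,s$ be positive integers with $2\le s\le\lfloor n/k\rfloor$, let $d=\lfloor n/s\rfloor$, and let $\alpha,\beta>0$. Let $F^*(\alpha,d\beta)$ denote the minimum, over all finite sequences of failures and repairs and all data collectors, of the min-cut separating the data collector from the source in the information flow graph of the FCRS with storage $\alpha$ and per-helper download $\beta$. Then $$F^*(\alpha,d\beta)=\begin{cases}kd\beta-\lfloor k/2\rfloor\lceil k/2\rceil\beta & \text{if } d\le\alpha/\beta,\\ k_1\alpha+(d-k_1)(k-k_1)\beta & \text{if } d+k-2k_1-1\le\alpha/\beta<\min\{d+k-2k_1+1,\ d\} \text{ for } k_1\in[\lceil k/2\rceil:k],\\ k\alpha & \text{if } \alpha/\beta<d-k-1.\end{cases}$$
   Context: Notation: $[a:b]=\{a,\dots,b\}$. FCRS: $n=ds+s_0$ servers ($s_0=n\bmod s$) in clusters $1,\dots,s$ of size $d$ and cluster $s+1$ of size $s_0$; server $j$ of cluster $i$ is $(i,j)$. Information flow graph: a source node; for every server and time $t\ge0$ an in-node and out-node joined by an edge of capacity $\alpha$; at $t=0$ the source connects to every in-node with infinite capacity. At the end of each time slot $t-1$ exactly one server $(r,\ell)$ fails; a repair cluster $i\in[s]$ with $i\ne r$ is chosen arbitrarily (cluster $s+1$ never serves as repair group), and there are edges of capacity $\beta$ from the time-$(t-1)$ out-nodes of all $d$ servers of cluster $i$ to the time-$t$ in-node of $(r,\ell)$; every other server has an infinite-capacity edge from its time-$(t-1)$ out-node to its time-$t$ in-node. A data collector at time $t$ is a node receiving infinite-capacity edges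 from the time-$t$ out-nodes of some $k$ distinct servers. *)

(* Defs.v *)
From HB Require Import structures.
From mathcomp Require Import all_boot all_order all_algebra.
Set Implicit Arguments. Unset Strict Implicit. Unset Printing Implicit Defensive.
Import Order.TTheory GRing.Theory Num.Theory.

(* ---------- Cluster layout of the FCRS (0-based indices) ----------
   Servers are numbered 0 .. n-1.  With d = n %/ s, server m < d*s lies in
   cluster m %/ d (clusters 0 .. s-1, each of size d, server (i,j) of the paper
   is m = (i-1)*d + (j-1)); servers d*s .. n-1 form the extra cluster s
   (the paper's cluster s+1, of size s0 = n %% s). *)
Definition clust_d (n s : nat) : nat := n %/ s.
Definition cluster_of (n s m : nat) : nat :=
  if m < s * clust_d n s then m %/ clust_d n s else s.
Definition cluster_members (n s i : nat) : seq nat :=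
  iota (i * clust_d n s) (clust_d n s).

(* A failure/repair event (r, i): server r fails, cluster i repairs it.
   Cluster i must be one of the s full clusters and differ from r's cluster. *)
Definition valid_event (n s : nat) (e : nat * nat) : bool :=
  [&& e.1 < n, e.2 < s & e.2 != cluster_of n s e.1].
(* A finite sequence of failures; event number t (0-based) happens at the end
   of time slot t, producing the nodes of time t+1. *)
Definition valid_scenario (n s : nat) (sc : seq (nat * nat)) : bool :=
  all (valid_event n s) sc.
(* A data collector (t, K) at time t <= T connected to k distinct servers K. *)
Definition valid_dc (n k T : nat) (dc : nat * seq nat) : bool :=
  [&& dc.1 <= T, uniq dc.2, size dc.2 == k & all (fun m => m < n) dc.2].

Inductive node := Src | DCnode | InN of nat & nat | OutN of nat & nat.
(* InN t m / OutN t m : in-/out-node of server m at time t *)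

Inductive capa (R : Type) := CInf | CFin of R.
Arguments CInf {R}.

Section IFG.
Variable R : realFieldType.
Variables (n s : nat) (alpha beta : R).

Definition ifg_edges (sc : seq (nat * nat)) (dc : nat * seq nat)
  : seq (node * node * capa R) :=
  let T := size sc in
  [seq (Src, InN 0 m, CInf) | m <- iota 0 n]
  ++ flatten [seq [seq (InN t m, OutN t m, CFin alpha) | m <- iota 0 n]
             | t <- iota 0 T.+1]
  ++ flatten [seq (let e := nth (0%N, 0%N) sc t in
                   flatten [seq (if m == e.1 then
                                   [seq (OutN t h, InN t.+1 m, CFin beta)
                                   | h <- cluster_members n s e.2]
                                 else [:: (OutN t m, InN t.+1 m, CInf)])
                           | m <- iota 0 n])
             | t <- iota 0 T]
  ++ [seq (OutN dc.1 m, DCnode, CInf) | m <- dc.2].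

Definition crosses (S : node -> bool) (e : node * node * capa R) : bool :=
  S e.1.1 && ~~ S e.1.2.

Definition is_finite_capa (c : capa R) : bool :=
  if c is CFin _ then true else false.

Local Open Scope ring_scope.

Definition capa_val (c : capa R) : R :=
  if c is CFin x then x else 0.

Definition finite_cut sc dc (S : node -> bool) : Prop :=
  [/\ S Src, ~~ S DCnode &
      all (fun e => crosses S e ==> is_finite_capa e.2) (ifg_edges sc dc)].

Definition cut_capacity sc dc (S : node -> bool) : R :=
  \sum_(e <- ifg_edges sc dc | crosses S e) capa_val e.2.

Definition is_min_cut sc dc (v : R) : Prop :=
  (exists S, finite_cut sc dc S /\ cut_capacity sc dc S = v) /\
  (forall S, finite_cut sc dc S -> v <= cut_capacity sc dc S).

End IFG.

Definition is_Fstar (R : realFieldType) (n k s : nat) (alpha beta : R) (v : R)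
  : Prop :=
  (exists sc dc, valid_scenario n s sc /\ valid_dc n k (size sc) dc /\
                 is_min_cut n s alpha beta sc dc v) /\
  (forall sc dc w, valid_scenario n s sc -> valid_dc n k (size sc) dc ->
                   is_min_cut n s alpha beta sc dc w -> (v <= w)%R).

(* Main.v *)
Require Import Defs.
From HB Require Import structures.
From mathcomp Require Import all_boot all_order all_algebra.
From mathcomp Require Import ring lra zify.
Import Order.TTheory GRing.Theory Num.Theory.

Module Aux.
Set Implicit Arguments. Unset Strict Implicit. Unset Printing Implicit Defensive.

Section Mantel.
Variables (T : finType) (A Q : {set T}) (tau cl c : T -> nat).
Hypothesis QA : Q \subset A.
Hypothesis ccl : forall y, y \in A -> c y != cl y.

Definition Ed (z y : T) := [&& z \in A, y \in Q, tau z < tau y & cl z == c y].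
Definition adj z y := Ed z y || Ed y z.
Definition dg u := #|[set v | adj u v]|.
Definition ecount := \sum_z \sum_y (Ed z y : nat).

Lemma Ed_A z y : Ed z y -> (z \in A) && (y \in A).
Proof. by case/and4P=> -> /(subsetP QA) ->. Qed.

Lemma dgE w : dg w = \sum_y (Ed w y : nat) + \sum_z (Ed z w : nat).
Proof.
rewrite /dg -sum1_card.
rewrite (eq_bigl (fun v => adj w v)); last by move=> v; rewrite inE.
rewrite big_mkcond /= -big_split /=; apply: eq_bigr => v _.
rewrite /adj; case E1: (Ed w v); case E2: (Ed v w) => //=.
move: E1 E2 => /and4P[_ _ h1 _] /and4P[_ _ h2 _]; lia.
Qed.

Lemma indep_bound (I : {set T}) :
  (forall u v, u \in I -> v \in I -> ~~ Ed u v) ->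
  ecount <= \sum_(w in A :\: I) dg w.
Proof.
move=> indI.
have -> : \sum_(w in A :\: I) dg w =
  \sum_(w in A :\: I) \sum_y (Ed w y : nat) + \sum_(w in A :\: I) \sum_z (Ed z w : nat).
  by rewrite -big_split; apply: eq_bigr => w _; rewrite dgE.
rewrite [X in _ <= _ + X](exchange_big_dep xpredT) //=.
rewrite [X in _ <= X + _]big_mkcond [X in _ <= _ + X]big_mkcond /=.
rewrite /ecount -big_split /=; apply: leq_sum => z _.
have -> : (if z \in A :\: I then \sum_y (Ed z y : nat) else 0) =
   \sum_y ((z \in A :\: I) && Ed z y : nat).
  by case: (z \in A :\: I) => //=; rewrite big1.
rewrite [X in _ <= _ + X]big_mkcond /= -big_split /=; apply: leq_sum => y _.
case Ez: (Ed z y) => //=; rewrite andbT.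
have /andP[zA yA] := Ed_A Ez.
rewrite !inE zA yA !andbT.
case zI: (z \in I) => //=; case yI: (y \in I) => //=.
by move: (indI z y zI yI); rewrite Ez.
Qed.

Lemma tri u v w : adj u v -> adj u w -> ~~ Ed v w.
Proof.
rewrite /adj => huv huw; apply/negP => hvw.
have cA x y : Ed x y -> c y != cl y.
  by move=> /Ed_A /andP[_ yA]; exact: ccl.
have cA' x y : Ed x y -> c x != cl x.
  by move=> /Ed_A /andP[xA _]; exact: ccl.
move: (hvw) => /and4P[_ _ t1 /eqP c1].
case/orP: huv => e1; case/orP: huw => e2;
  move: (e1) (e2) => /and4P[_ _ t2 /eqP c2] /and4P[_ _ t3 /eqP c3].
- by move: (cA _ _ e1); rewrite -c2 c1 -c3 eqxx.
- lia.
- by move: (cA _ _ e1); rewrite -c2 c1 -c3 eqxx.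
- by move: (cA _ _ hvw); rewrite -c1 c2 -c3 eqxx.
Qed.

Lemma sum_dg_le (B : {set T}) u : B \subset A ->
  (forall w, w \in A -> dg w <= dg u) ->
  \sum_(w in B) dg w <= #|B| * dg u.
Proof.
move=> BA hm; rewrite -sum_nat_const; apply: leq_sum => w wB.
by apply: hm; apply: (subsetP BA).
Qed.

Lemma mantel : exists a, [&& #|A :\: Q| <= a, a <= #|A| & ecount <= a * (#|A| - a)].
Proof.
case: (set_0Vmem A) => [A0 | [y0 y0A]].
  exists 0; rewrite A0 set0D cards0 /=.
  rewrite /ecount big1 // => z _; rewrite big1 // => y _.
  by rewrite /Ed A0 inE.
case: (@arg_maxnP _ y0 (fun x => x \in A) dg y0A) => u uA umax.
set N := [set v | adj u v].
have NA : N \subset A.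
  apply/subsetP => v; rewrite inE /adj => /orP[] /Ed_A /andP[] //.
have dgN : dg u = #|N| by [].
have DA : dg u <= #|A| by rewrite dgN subset_leq_card.
have pA : #|A :\: Q| <= #|A| by rewrite subset_leq_card // subsetDl.
have b1 : ecount <= (#|A| - dg u) * dg u.
  apply: (leq_trans (indep_bound (I := N) _)).
    by move=> v w; rewrite !inE => h1 h2; apply: (tri h1 h2).
  have -> : #|A| - dg u = #|A :\: N|.
    by rewrite cardsD (setIidPr NA).
  by apply: sum_dg_le => //; exact: subsetDl.
have b2 : ecount <= (#|A| - #|A :\: Q|) * dg u.
  apply: (leq_trans (indep_bound (I := A :\: Q) _)).
    move=> v w _; rewrite inE => /andP[wQ _].
    by apply/negP => /and4P[_ wQ' _ _]; rewrite wQ' in wQ.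
  have -> : #|A| - #|A :\: Q| = #|A :\: (A :\: Q)|.
    by rewrite [in RHS]cardsD (setIidPr (subsetDl A Q)).
  by apply: sum_dg_le => //; exact: subsetDl.
case: (leqP #|A :\: Q| (dg u)) => h.
  exists (dg u); rewrite h DA /=; rewrite mulnC; exact: b1.
exists #|A :\: Q|; rewrite leqnn pA /=.
apply: (leq_trans b2); rewrite mulnC leq_mul2r; apply/orP; right; exact: ltnW.
Qed.
End Mantel.

Lemma card_sum (T : finType) (B : {set T}) : #|B| = \sum_z (z \in B : nat).
Proof. by rewrite -sum1_card big_mkcond. Qed.

Local Open Scope ring_scope.
Lemma arith2 (R : realFieldType) (a p k k1 : nat) (t : R) :
  (p <= a)%N -> (a <= k)%N -> (k <= 2*k1)%N -> (k1 <= k)%N -> 0 < t ->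
  (2*k1)%:R - k%:R - 1 < t -> t <= (2*k1)%:R - k%:R + 1 ->
  (a*(k-a))%:R <= (k1*(k-k1))%:R + (k1%:R - p%:R) * t.
Proof.
move=> pa ak kk1 k1k t0 tl tu.
rewrite !natrM !natrB // in tl tu *.
have hpa : (p%:R <= a%:R :> R) by rewrite ler_nat.
have hak : (a%:R <= k%:R :> R) by rewrite ler_nat.
have hkk : (k%:R <= 2 * k1%:R :> R) by rewrite -natrM ler_nat.
have hk1 : (k1%:R <= k%:R :> R) by rewrite ler_nat.
have p0 : (0 <= p%:R :> R) by [].
case: (leqP k1 a) => h1.
  have h1' : (k1%:R <= a%:R :> R) by rewrite ler_nat.
  have e1 : 0 <= (a%:R - k1%:R) * (a%:R + k1%:R - k%:R) :> R.
    by apply: mulr_ge0; lra.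
  case: (leqP p k1) => h2.
    have h2' : (p%:R <= k1%:R :> R) by rewrite ler_nat.
    have e2 : 0 <= (k1%:R - p%:R) * t :> R by apply: mulr_ge0; lra.
    nra.
  have h2' : (k1%:R + 1 <= p%:R :> R) by rewrite natr1 ler_nat.
  have e3 : 0 <= (a%:R - p%:R) * (a%:R + p%:R - k%:R) :> R.
    by apply: mulr_ge0; lra.
  have e4 : 0 <= (p%:R - k1%:R) * (2 * k1%:R - k%:R + 1 - t) :> R.
    by apply: mulr_ge0; lra.
  nra.
have h1' : (a%:R + 1 <= k1%:R :> R) by rewrite natr1 ler_nat.
have e1 : 0 <= (k1%:R - a%:R) * (k%:R - k1%:R - a%:R + t) :> R.
  by apply: mulr_ge0; lra.
have e2 : 0 <= (a%:R - p%:R) * t :> R by apply: mulr_ge0; lra.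
nra.
Qed.

Lemma arith1 (a k : nat) : (a <= k)%N -> (a * (k - a) <= k./2 * uphalf k)%N.
Proof.
move=> ak.
have hk : k = (k./2 + uphalf k)%N by rewrite uphalf_half addnC -addnA addnn odd_double_half.
have hu : (k./2 <= uphalf k <= k./2 + 1)%N.
  by rewrite uphalf_half; case: (odd k) => /=; lia.
move: hk hu; set h := k./2; set u := uphalf k => hk hu.
case: (leqP a h) => ha.
  have [i hi] : exists i, h = (a + i)%N by exists (h - a)%N; lia.
  have -> : (k - a = i + u)%N by lia.
  rewrite hi mulnDr mulnDl.
  have : (i * a <= i * u)%N by apply: leq_mul => //; lia.
  rewrite [(a * i)%N]mulnC; lia.
have [i hi] : exists i, a = (u + i)%N by exists (a - u)%N; lia.
have [w hw] : exists w, h = (i + w)%N by exists (h - i)%N; lia.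
have -> : (k - a = w)%N by lia.
rewrite hi hw !mulnDl.
have : (i * w <= i * u)%N by apply: leq_mul => //; lia.
rewrite [(w * u)%N]mulnC [(u * w)%N]mulnC [(i*u)%N]mulnC; lia.
Qed.

Local Close Scope ring_scope.

Section CombR.
Variables (R : realFieldType) (T : finType) (A : {set T}) (tau cl c : T -> nat).
Variables (r : R) (d : nat).
Hypothesis ccl : forall y, y \in A -> c y != cl y.
Local Open Scope ring_scope.

Definition bcnt y := #|[set z in A | (tau z < tau y)%N && (cl z == c y)]|.
Definition Qs := [set y in A | d%:R - (bcnt y)%:R < r].

Lemma QsA : Qs \subset A.
Proof. by apply/subsetP => y; rewrite inE => /andP[]. Qed.

Lemma ecount_Q : ecount A Qs tau cl c = (\sum_(y in Qs) bcnt y)%N.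
Proof.
rewrite /ecount exchange_big /= [RHS]big_mkcond /=; apply: eq_bigr => y _.
rewrite /bcnt card_sum; case yQ: (y \in Qs).
  by apply: eq_bigr => z _; rewrite /Ed yQ !inE; case: (z \in A).
by rewrite big1 // => z _; rewrite /Ed yQ andbF.
Qed.

Lemma sum_formula :
  \sum_(y in A) Num.min r (d%:R - (bcnt y)%:R) =
  #|A :\: Qs|%:R * r + #|Qs|%:R * d%:R - (ecount A Qs tau cl c)%:R.
Proof.
rewrite (big_setID Qs) /= (setIidPr QsA) addrC.
rewrite (eq_bigr (fun _ => r)); last first.
  move=> y; rewrite !inE => /andP[yQ yA]; rewrite yA /= in yQ.
  by apply: min_l; rewrite leNgt.
rewrite sumr_const -addrA; congr (_ + _); first by rewrite mulr_natl.
rewrite (eq_bigr (fun y => d%:R - (bcnt y)%:R)); last first.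
  move=> y; rewrite inE => /andP[_ yQ]; apply: min_r; exact: ltW.
rewrite sumrB sumr_const ecount_Q natr_sum mulr_natl //.
Qed.

Let k := #|A|.
Let p := #|A :\: Qs|.

Lemma cardQ : #|Qs|%:R = k%:R - p%:R :> R.
Proof.
rewrite /p cardsD (setIidPr QsA) natrB; last by rewrite subset_leq_card // QsA.
by rewrite opprB addrC subrK.
Qed.

Lemma comb1 : d%:R <= r ->
  (k * d)%:R - (k./2 * uphalf k)%:R <= \sum_(y in A) Num.min r (d%:R - (bcnt y)%:R).
Proof.
move=> hr; rewrite sum_formula cardQ -/p.
have [a /and3P[pa ak ea]] := @mantel T A Qs tau cl c QsA ccl.
have e1 := leq_trans ea (arith1 ak).
have e1' : (ecount A Qs tau cl c)%:R <= (k./2 * uphalf k)%:R :> R by rewrite ler_nat.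
have p0 : 0 <= p%:R :> R by [].
rewrite natrM.
have : p%:R * d%:R <= p%:R * r by rewrite ler_wpM2l.
lra.
Qed.

Lemma comb2 k1 : (uphalf k <= k1 <= k)%N ->
  d%:R + k%:R - 2 * k1%:R - 1 <= r ->
  r < Num.min (d%:R + k%:R - 2 * k1%:R + 1) d%:R ->
  k1%:R * r + (d%:R - k1%:R) * (k%:R - k1%:R) <= \sum_(y in A) Num.min r (d%:R - (bcnt y)%:R).
Proof.
move=> /andP[hk1 k1k] lo; rewrite lt_min => /andP[hi hd].
rewrite sum_formula cardQ -/p.
have [a /and3P[pa ak ea]] := @mantel T A Qs tau cl c QsA ccl.
have kk : (k <= 2 * k1)%N.
  move: hk1; rewrite uphalf_half => h.
  have := odd_double_half k; rewrite -addnn; lia.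
have := @arith2 R a p k k1 (d%:R - r) pa ak kk k1k.
rewrite !natrM natrB // => /(_ _ _ _) H.
have e' : (ecount A Qs tau cl c)%:R <= (a * (k - a))%:R :> R by rewrite ler_nat.
rewrite natrM natrB // in e'.
have := H ltac:(lra) ltac:(lra) ltac:(lra).
move=> h2; rewrite natrB // in h2; nra.
Qed.

Lemma bcnt_le y : y \in A -> (bcnt y <= k.-1)%N.
Proof.
move=> yA; have := cardsD1 y A; rewrite yA /k => ->; rewrite add1n /=.
apply: subset_leq_card; apply/subsetP => z; rewrite !inE => /andP[zA /andP[tz _]].
by rewrite zA andbT; apply/eqP => zy; rewrite zy ltnn in tz.
Qed.

Lemma comb3 : r < d%:R - k%:R - 1 ->
  k%:R * r <= \sum_(y in A) Num.min r (d%:R - (bcnt y)%:R).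
Proof.
move=> hr.
have Q0 : Qs = set0.
  apply/setP => y; rewrite !inE; apply/negP => /andP[yA hy].
  have := bcnt_le yA; rewrite -(ler_nat R) => hb.
  have k0 : (0 < k)%N by rewrite /k card_gt0; apply/set0Pn; exists y.
  rewrite -(prednK k0) -natr1 in hr; lra.
rewrite sum_formula ecount_Q Q0 setD0 cards0 big_set0 -/k; lra.
Qed.
End CombR.


Section Cap.
Variables (R : realFieldType) (n s : nat) (alpha beta : R).
Variables (sc : seq (nat * nat)) (dc : nat * seq nat) (S : node -> bool).
Local Open Scope ring_scope.

Definition rr t := (nth (0%N, 0%N) sc t).1.
Definition hc t := (nth (0%N, 0%N) sc t).2.
Definition aterm t m := if S (InN t m) && ~~ S (OutN t m) then alpha else 0.
Definition rterm t m := if m == rr t then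
  \sum_(h <- cluster_members n s (hc t))
     (if S (OutN t h) && ~~ S (InN t.+1 m) then beta else 0) else 0.

Lemma big_cat4 (T : Type) (a b c d : seq T) (F : T -> R) :
  \sum_(i <- a ++ (b ++ (c ++ d))) F i =
  \sum_(i <- a) F i + \sum_(i <- b) F i + \sum_(i <- c) F i + \sum_(i <- d) F i.
Proof. by rewrite !big_cat /= !addrA. Qed.

Lemma cap_formula : cut_capacity n s alpha beta sc dc S =
  \sum_(t <- iota 0 (size sc).+1) \sum_(m <- iota 0 n) aterm t m +
  \sum_(t <- iota 0 (size sc)) \sum_(m <- iota 0 n) rterm t m.
Proof.
rewrite /cut_capacity /ifg_edges big_mkcond big_cat4.
set RH := (X in _ = X).
rewrite [X in X + _ + _ + _]big_map [X in X + _ + _ + _]big1 ?add0r; last first.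
  by move=> m _; case: (crosses _ _).
rewrite [X in _ + _ + X]big_map [X in _ + _ + X]big1 ?addr0; last first.
  by move=> m _; case: (crosses _ _).
rewrite /RH; congr (_ + _).
  rewrite big_flatten big_map; apply: eq_bigr => t _.
  by rewrite big_map; apply: eq_bigr => m _.
rewrite big_flatten big_map; apply: eq_bigr => t _.
rewrite big_flatten big_map; apply: eq_bigr => m _.
rewrite /rterm /rr /hc; case: eqP => [->|_].
  by rewrite big_map; apply: eq_bigr => h _.
by rewrite big_seq1; case: (crosses _ _).
Qed.

Lemma all_flatten (T : Type) (P : pred T) (ss : seq (seq T)) :
  all P (flatten ss) = all (all P) ss.
Proof. by elim: ss => //= x ss IH; rewrite all_cat IH. Qed.

Lemma all_cat4 (T : Type) (P : pred T) (a b c d : seq T) :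
  all P (a ++ (b ++ (c ++ d))) = [&& all P a, all P b, all P c & all P d].
Proof. by rewrite !all_cat. Qed.

Lemma cut_facts : finite_cut n s alpha beta sc dc S ->
  [/\ S Src, ~~ S DCnode,
   (forall m, (m < n)%N -> S (InN 0 m)),
   (forall t m, (t < size sc)%N -> (m < n)%N -> m != rr t -> S (OutN t m) -> S (InN t.+1 m)) &
   (forall m, m \in dc.2 -> ~~ S (OutN dc.1 m))].
Proof.
case=> hS hD; rewrite /ifg_edges all_cat4 => /and4P[h1 _ h3 h4].
split => //.
- move=> m mn; move: h1; rewrite all_map => /allP /(_ m).
  rewrite mem_iota /= add0n mn /crosses /= hS /= => /(_ isT).
  by case: (S (InN 0 m)).
- move=> t m tT mn mr Sm; move: h3; rewrite all_flatten all_map => /allP /(_ t).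
  rewrite mem_iota add0n tT => /(_ isT) /=.
  rewrite all_flatten all_map => /allP /(_ m); rewrite mem_iota add0n mn => /(_ isT) /=.
  move: mr; rewrite /rr => /negbTE ->; rewrite /= andbT /crosses /= Sm /=.
  by case: (S (InN t.+1 m)).
- move=> m mK; move: h4; rewrite all_map => /allP /(_ m mK).
  by rewrite /crosses /= hD andbT implybF.
Qed.
End Cap.


Lemma dc_subset (T : finType) (X : {set T}) (tau : T -> nat) j : j <= #|X| ->
  exists A : {set T}, [/\ A \subset X, #|A| = j &
    forall x y, x \in X -> y \in A -> tau x < tau y -> x \in A].
Proof.
elim: j => [|j IH] hj.
  exists set0; split; [exact: sub0set | by rewrite cards0 | by move=> x y _; rewrite inE].
have [A [AX cA dA]] := IH (ltnW hj).
have : #|X :\: A| > 0.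
  by rewrite cardsD (setIidPr AX) cA subn_gt0.
rewrite card_gt0 => /set0Pn [x0 x0XA].
case: (@arg_minnP _ x0 (fun x => x \in X :\: A) tau x0XA) => x xXA xmin.
move: (xXA); rewrite inE => /andP[xA xX].
exists (x |: A); split.
- by rewrite subUset sub1set xX AX.
- by rewrite cardsU1 (negbTE xA) cA.
- move=> z y zX; rewrite in_setU1 => /orP[/eqP -> | yA] hz.
    rewrite in_setU1; apply/orP; right; apply/negPn/negP => zA.
    have := xmin z; rewrite inE zA zX => /(_ isT); rewrite leqNgt hz //.
  by rewrite in_setU1 (dA z y zX yA hz) orbT.
Qed.

Section SIC.
Local Open Scope ring_scope.
Lemma sum_if_count (R : realFieldType) (T : Type) (P : pred T) (L : seq T) (b : R) :
  \sum_(h <- L) (if P h then b else 0) = b * (count P L)%:R.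
Proof.
elim: L => [|x L IH]; first by rewrite big_nil mulr0.
rewrite big_cons IH /= natrD mulrDr; case: (P x) => /=; rewrite ?mulr1 ?mulr0 ?add0r //.
Qed.
End SIC.

Lemma cluster_mem n s c h : c < s -> h \in cluster_members n s c ->
  (h < n) && (cluster_of n s h == c).
Proof.
rewrite /cluster_members /cluster_of mem_iota => cs /andP[h1 h2].
set d := clust_d n s in h1 h2 *.
have d0 : 0 < d by case: d h1 h2 => //; rewrite addn0 => h1 h2; lia.
have hsd : d * s <= n by rewrite /d /clust_d leq_trunc_div.
have h3 : h < s * d.
  have : c.+1 * d <= s * d by rewrite leq_mul2r cs orbT.
  rewrite mulSn; lia.
rewrite h3.
have -> : h %/ d = c.
  have -> : h = c * d + (h - c * d) by rewrite subnKC.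
  rewrite divnMDl // divn_small ?addn0 //; lia.
rewrite eqxx andbT; lia.
Qed.

Section LB.
Variables (R : realFieldType) (n s k : nat) (alpha beta : R).
Variables (sc : seq (nat * nat)) (dc : nat * seq nat) (S : node -> bool).
Hypothesis n0 : 0 < n.
Hypothesis vsc : valid_scenario n s sc.
Hypothesis vdc : valid_dc n k (size sc) dc.
Hypothesis fc : finite_cut n s alpha beta sc dc S.
Hypothesis a0 : (0 < alpha)%R.
Hypothesis b0 : (0 < beta)%R.

Notation T := (size sc).
Definition isEv t m := ~~ S (OutN t m) && ~~ [&& 0 < t, m != rr sc t.-1 & ~~ S (OutN t.-1 m)].

Fixpoint orig t m := match t with
  | 0 => 0
  | t'.+1 => if (m != rr sc t') && ~~ S (OutN t' m) then orig t' m else t'.+1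
  end.

Lemma orig_ev t m : ~~ S (OutN t m) -> isEv (orig t m) m && (orig t m <= t).
Proof.
elim: t => [|t IH] h /=; first by rewrite /isEv h.
case: ifP => [/andP[_ h2]|hf].
  by have /andP[-> ?] := IH h2; rewrite /= ltnW // ltnS.
by rewrite /isEv h /= hf leqnn.
Qed.

Definition Ev := ('I_T.+1 * 'I_n)%type.
Definition mk m : 'I_n := insubd (Ordinal n0) m.
Lemma mkE m : m < n -> val (mk m) = m.
Proof. by move=> h; rewrite /mk val_insubd h. Qed.

Definition X := [set y : Ev | isEv y.1 y.2].
Definition tauf (y : Ev) := nat_of_ord y.1.
Definition clf (y : Ev) := cluster_of n s y.2.
Definition cf (y : Ev) := if S (InN y.1 y.2) then (if cluster_of n s y.2 == 0 then 1 else 0)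
  else hc sc (y.1).-1.

Lemma X_card : k <= #|X|.
Proof.
case/and4P: vdc => h1 h2 /eqP h3 /allP h4.
have [F1 F2 F3 F4 F5] := cut_facts fc.
pose g m : Ev := (inord (orig dc.1 m), mk m).
have -> : k = size (map g dc.2) by rewrite size_map h3.
rewrite cardE; apply: uniq_leq_size.
  rewrite map_inj_in_uniq // => x y xK yK [] _ /(congr1 val).
  by rewrite !mkE ?h4.
move=> z /mapP [m mK ->]; rewrite mem_enum inE /=.
have /andP[e1 e2] := orig_ev (F5 m mK).
by rewrite inordK ?mkE ?h4 // ltnS (leq_trans e2).
Qed.

Lemma ccl_ok (A : {set Ev}) : A \subset X -> forall y, y \in A -> cf y != clf y.
Proof.
move=> AX y yA; rewrite /cf /clf.
case: ifP => hi; first by case: (cluster_of n s y.2) => [|[|x]].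
have [F1 F2 F3 F4 F5] := cut_facts fc.
have := subsetP AX y yA; rewrite inE /isEv => /andP[_ hE].
case: y yA hi hE => [t m] yA /= hi hE.
have t0 : 0 < t.
  rewrite lt0n; apply/negP => /eqP t0; move: hi; rewrite t0 F3 //.
have tT : t.-1 < T by rewrite prednK // -ltnS.
have mr : m = rr sc t.-1 :> nat.
  apply/eqP; apply/negPn/negP => mr.
  move: hE; rewrite t0 mr /= => /negPn hO.
  by move: (F4 _ _ tT (ltn_ord m) mr hO); rewrite prednK // hi.
move/allP: vsc => /(_ (nth (0,0) sc t.-1)) /(_ (mem_nth _ tT)).
by case/and3P => _ _; rewrite mr /hc /rr.
Qed.

Local Open Scope ring_scope.

Lemma sum_ord_iota (N : nat) (G : nat -> R) : \sum_(i < N) G i = \sum_(i <- iota 0 N) G i.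
Proof. by rewrite -(big_mkord xpredT) /index_iota subn0. Qed.

Lemma sum_pair (a b : nat) (F : nat -> nat -> R) :
  \sum_(y : 'I_a * 'I_b) F y.1 y.2 = \sum_(t <- iota 0 a) \sum_(m <- iota 0 b) F t m.
Proof.
rewrite -sum_ord_iota -(pair_bigA _ (fun (t : 'I_a) (m : 'I_b) => F t m)) /=.
apply: eq_bigr => t _; by rewrite sum_ord_iota.
Qed.

Definition costfull (y : Ev) := aterm alpha S y.1 y.2 +
  (if (0 < y.1)%N then rterm n s beta sc S (y.1).-1 y.2 else 0).

Lemma costfull_ge0 y : 0 <= costfull y.
Proof.
rewrite /costfull /aterm /rterm; apply: addr_ge0; first by case: ifP => // _; exact: ltW.
case: ifP => // _; case: ifP => // _; apply: sumr_ge0 => h _; case: ifP => // _; exact: ltW.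
Qed.

Lemma sum_costfull : \sum_(y : Ev) costfull y = cut_capacity n s alpha beta sc dc S.
Proof.
rewrite cap_formula /costfull big_split /=.
rewrite (@sum_pair T.+1 n (fun t m => aterm alpha S t m)); congr (_ + _).
rewrite (@sum_pair T.+1 n (fun t m => if (0 < t)%N then rterm n s beta sc S t.-1 m else 0)).
rewrite -sum_ord_iota big_ord_recl /= big1 ?add0r; last by move=> m _.
by rewrite -sum_ord_iota; apply: eq_bigr => i _; rewrite add0n.
Qed.


Lemma rep_facts (y : Ev) : y \in X -> ~~ S (InN y.1 y.2) ->
  [/\ (0 < y.1)%N, val y.2 = rr sc (y.1).-1 & ((y.1).-1 < T)%N].
Proof.
have [F1 F2 F3 F4 F5] := cut_facts fc.
rewrite inE /isEv => /andP[_ hE] /negbTE hi.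
case: y hi hE => [t m] /= hi hE.
have t0 : (0 < t)%N.
  rewrite lt0n; apply/negP => /eqP t0; move: hi; rewrite t0 F3 //.
have tT : (t.-1 < T)%N by rewrite prednK // -ltnS.
split => //.
apply/eqP; apply/negPn/negP => mr.
move: hE; rewrite t0 mr /= => /negPn hO.
by move: (F4 _ _ tT (ltn_ord m) mr hO); rewrite prednK // hi.
Qed.

Lemma hc_lt (t : nat) : (t < T)%N -> (hc sc t < s)%N.
Proof.
move=> tT; move/allP: vsc => /(_ (nth (0%N,0%N) sc t)) /(_ (mem_nth _ tT)).
by case/and3P.
Qed.

Lemma inj_count (A : {set Ev}) (AX : A \subset X)
  (dA : forall x y, x \in X -> y \in A -> (tauf x < tauf y)%N -> x \in A) y :
  y \in A -> ~~ S (InN y.1 y.2) ->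
  (count (predC (fun h => S (OutN (y.1).-1 h))) (cluster_members n s (hc sc (y.1).-1))
    <= bcnt A tauf clf cf y)%N.
Proof.
move=> yA hi.
have yX := subsetP AX y yA.
have [t0 ym tT] := rep_facts yX hi.
have cs := hc_lt tT.
set L := filter (predC (fun h => S (OutN (y.1).-1 h))) (cluster_members n s (hc sc (y.1).-1)).
pose f h : Ev := (inord (orig (y.1).-1 h), mk h).
rewrite -size_filter -/L -(size_map f) /bcnt cardE.
apply: uniq_leq_size.
  rewrite map_inj_in_uniq; first by rewrite filter_uniq // iota_uniq.
  move=> h1 h2; rewrite !mem_filter => /andP[_ m1] /andP[_ m2] [] _ /(congr1 val).
  have /andP[n1 _] := cluster_mem cs m1; have /andP[n2 _] := cluster_mem cs m2.
  by rewrite !mkE.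
move=> z /mapP [h]; rewrite mem_filter => /andP[hO hm] ->.
have /andP[hn /eqP hcl] := cluster_mem cs hm.
have /andP[e1 e2] := orig_ev hO.
have oT : (orig (y.1).-1 h < T.+1)%N.
  by rewrite ltnS (leq_trans e2) // ltnW.
have fX : f h \in X by rewrite inE /= inordK // mkE.
have ft : (tauf (f h) < tauf y)%N.
  by rewrite /tauf /= inordK // (leq_ltn_trans e2) // prednK.
rewrite mem_enum inE (dA _ _ fX yA ft) ft /= /clf /cf /= mkE // hcl.
by rewrite (negbTE hi) eqxx.
Qed.


Lemma per_y (A : {set Ev}) (AX : A \subset X)
  (dA : forall x y, x \in X -> y \in A -> (tauf x < tauf y)%N -> x \in A) y :
  y \in A ->
  beta * Num.min (alpha / beta) ((clust_d n s)%:R - (bcnt A tauf clf cf y)%:R) <= costfull y.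
Proof.
move=> yA.
have yX := subsetP AX y yA.
have bne : beta != 0 by rewrite gt_eqF.
case hi: (S (InN y.1 y.2)).
  move: (yX); rewrite inE /isEv => /andP[hO _].
  rewrite /costfull /aterm hi hO /=.
  have h1 : beta * Num.min (alpha / beta) ((clust_d n s)%:R - (bcnt A tauf clf cf y)%:R) <= alpha.
    have hm : Num.min (alpha / beta) ((clust_d n s)%:R - (bcnt A tauf clf cf y)%:R) <= alpha / beta.
      by rewrite ge_min lexx.
    have e : beta * (alpha / beta) = alpha by rewrite mulrC divfK.
    have := ler_wpM2l (ltW b0) hm; lra.
  have h2 : 0 <= (if (0 < y.1)%N then rterm n s beta sc S y.1.-1 y.2 else 0).
    case: ifP => // _; rewrite /rterm; case: ifP => // _.
    by apply: sumr_ge0 => h _; case: ifP => // _; exact: ltW.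
  by apply: (le_trans h1); rewrite lerDl.
have [t0 ym tT] := rep_facts yX (negbT hi).
have ic := inj_count AX dA yA (negbT hi).
rewrite /costfull t0 /rterm -ym eqxx prednK // hi.
rewrite (eq_bigr (fun h => if S (OutN y.1.-1 h) then beta else 0)); last first.
  by move=> h _; rewrite andbT.
rewrite sum_if_count.
have h0 : 0 <= aterm alpha S y.1 y.2 by rewrite /aterm; case: ifP => // _; exact: ltW.
set cnt := count (fun h => S (OutN y.1.-1 h)) (cluster_members n s (hc sc y.1.-1)).
have hsz : (cnt + count (predC (fun h => S (OutN y.1.-1 h))) (cluster_members n s (hc sc y.1.-1)) = clust_d n s)%N.
  by rewrite /cnt count_predC /cluster_members size_iota.
have hd : ((clust_d n s)%:R - (bcnt A tauf clf cf y)%:R <= cnt%:R :> R).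
  rewrite lerBlDr -natrD ler_nat; lia.
have : Num.min (alpha / beta) ((clust_d n s)%:R - (bcnt A tauf clf cf y)%:R) <= cnt%:R.
  by rewrite ge_min hd orbT.
move=> hm; have := ler_wpM2l (ltW b0) hm; lra.
Qed.

Lemma cap_bound (A : {set Ev}) (AX : A \subset X)
  (dA : forall x y, x \in X -> y \in A -> (tauf x < tauf y)%N -> x \in A) :
  beta * \sum_(y in A) Num.min (alpha / beta) ((clust_d n s)%:R - (bcnt A tauf clf cf y)%:R)
  <= cut_capacity n s alpha beta sc dc S.
Proof.
rewrite -sum_costfull mulr_sumr.
apply: (le_trans (ler_sum _ (fun y yA => per_y AX dA yA))).
rewrite [X in _ <= X](bigID (fun y => y \in A)) /= lerDl.
by apply: sumr_ge0 => y _; exact: costfull_ge0.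
Qed.

End LB.

Section LB2.
Local Open Scope ring_scope.
Lemma lower_bound (R : realFieldType) (n s k : nat) (alpha beta v : R) :
  (0 < n)%N -> 0 < alpha -> 0 < beta ->
  (forall (T : finType) (A : {set T}) (tau cl c : T -> nat), #|A| = k ->
     (forall y, y \in A -> c y != cl y) ->
     v <= beta * \sum_(y in A) Num.min (alpha / beta) ((clust_d n s)%:R - (bcnt A tau cl c y)%:R)) ->
  forall sc dc S, valid_scenario n s sc -> valid_dc n k (size sc) dc ->
    finite_cut n s alpha beta sc dc S -> v <= cut_capacity n s alpha beta sc dc S.
Proof.
move=> n0 a0 b0 H sc dc S vsc vdc fc.
have [A [AX cA dA]] := @dc_subset _ _ (tauf (n:=n) (sc:=sc)) _ (X_card n0 vdc fc).
apply: le_trans (cap_bound n0 vsc vdc fc a0 b0 AX dA).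
apply: H => // y yA. exact: (ccl_ok vsc fc AX yA).
Qed.
End LB2.


Section Con.
Variables (R : realFieldType) (n s : nat) (alpha beta : R) (a b d : nat) (am : bool).
Hypothesis hd : clust_d n s = d.
Hypothesis s2 : 2 <= s.
Hypothesis ad : a <= d.
Hypothesis bd : b <= d.
Hypothesis d0 : 0 < d.
Hypothesis a0 : (0 < alpha)%R.
Hypothesis b0 : (0 < beta)%R.

Lemma dn : 2 * d <= n.
Proof.
rewrite -hd /clust_d; apply: leq_trans (leq_trunc_div n s).
by rewrite mulnC leq_mul2l s2 orbT.
Qed.

Lemma clus0 m : m < d -> cluster_of n s m = 0.
Proof.
move=> md; rewrite /cluster_of hd.
have -> : m < s * d by apply: (leq_trans md); rewrite leq_pmull //; lia.
by rewrite divn_small.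
Qed.

Lemma clus1 m : d <= m < 2 * d -> cluster_of n s m = 1.
Proof.
move=> /andP[h1 h2]; rewrite /cluster_of hd.
have -> : m < s * d by apply: (leq_trans h2); rewrite leq_mul2r s2 orbT.
have -> : m = 1 * d + (m - d) by lia.
by rewrite divnMDl // divn_small //; lia.
Qed.

Definition csc := [seq (i, 1) | i <- iota 0 a] ++ [seq (d + j, 0) | j <- iota 0 b].
Definition cdc := (a + b, iota 0 a ++ iota d b).

Definition Sc (x : node) : bool := match x with
 | Src => true
 | DCnode => false
 | InN t m => if m < a then (t <= m) || (am && (t == m.+1))
              else if (d <= m) && (m < d + b) then t <= a + (m - d) else true
 | OutN t m => if m < a then t <= m
              else if (d <= m) && (m < d + b) then t <= a + (m - d) else true
 end.

Lemma size_csc : size csc = a + b.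
Proof. by rewrite size_cat !size_map !size_iota. Qed.

Lemma nth_csc t : t < a + b ->
  nth (0, 0) csc t = if t < a then (t, 1) else (d + (t - a), 0).
Proof.
move=> tab; rewrite nth_cat size_map size_iota; case: ifP => ta.
  by rewrite (nth_map 0) ?size_iota // nth_iota.
rewrite (nth_map 0) ?size_iota ?nth_iota //; lia.
Qed.

Lemma vsc_c : valid_scenario n s csc.
Proof.
have := dn => dn'.
rewrite /valid_scenario all_cat !all_map; apply/andP; split; apply/allP => x; rewrite mem_iota => /andP[_ hx] /=.
  rewrite /valid_event /= clus0; [|lia]; apply/and3P; split => //; lia.
rewrite /valid_event /= clus1; [|lia]; apply/and3P; split => //; lia.
Qed.

Lemma vdc_c : valid_dc n (a + b) (size csc) cdc.
Proof.
have := dn => dn'.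
rewrite /valid_dc size_csc /= leqnn size_cat !size_iota eqxx /=.
apply/andP; split.
  rewrite cat_uniq !iota_uniq /= andbT; apply/hasPn => x; rewrite !mem_iota => /andP[h1 _].
  apply/negP => /andP[_ h2]; lia.
by apply/allP => x; rewrite mem_cat !mem_iota => /orP[] /andP[_ h]; lia.
Qed.


Lemma rr_c t : t < a + b -> rr csc t = if t < a then t else d + (t - a).
Proof. by move=> h; rewrite /rr nth_csc //; case: ifP. Qed.

Lemma hc_c t : t < a + b -> hc csc t = if t < a then 1 else 0.
Proof. by move=> h; rewrite /hc nth_csc //; case: ifP. Qed.

Lemma fc_c : finite_cut n s alpha beta csc cdc Sc.
Proof.
split => //; rewrite /ifg_edges all_cat4; apply/and4P; split.
- rewrite all_map; apply/allP => m _ /=; rewrite /crosses /=.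
  by case: ifP => //; case: ifP.
- rewrite all_flatten all_map; apply/allP => t _ /=.
  by rewrite all_map; apply/allP => m _ /=; rewrite implybT.
- rewrite all_flatten all_map; apply/allP => t; rewrite mem_iota size_csc => /andP[_ ht] /=.
  rewrite all_flatten all_map; apply/allP => m; rewrite mem_iota => /andP[_ hm] /=.
  case: ifP => hmr.
    by rewrite all_map; apply/allP => h _ /=; rewrite implybT.
  rewrite /= andbT /crosses /= implybF negb_and negbK.
  have := hmr; rewrite -/(rr csc t) rr_c // => hmr'.
  case: ifP => ma.
    case: (ltngtP t m) => tm.
    - by [].
    - by [].
    - by move: hmr'; rewrite tm ma eqxx.
  case: ifP => mb //.
  case: (ltngtP t (a + (m - d))) => tm.
  - by [].
  - by [].
  - move: hmr'; case: ifP => ta; move/eqP; lia.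
- rewrite all_map; apply/allP => m; rewrite mem_cat !mem_iota => hm /=.
  rewrite /crosses /= andbT implybF.
  case: ifP => ma; first by rewrite -ltnNge; lia.
  case: ifP => mb; first by rewrite -ltnNge; lia.
  by move: hm ma mb; rewrite /= add0n; case: (m < a); case: (d <= m < d + b).
Qed.


Local Open Scope ring_scope.

Lemma pick_sum (N j : nat) (G : nat -> R) : (j < N)%N ->
  \sum_(m <- iota 0 N) (if m == j then G m else 0) = G j.
Proof.
move=> jN; rewrite (bigD1_seq j) ?iota_uniq ?mem_iota //= eqxx big1 ?addr0 //.
by move=> i /negbTE ->.
Qed.

Lemma count_int (lo hi N : nat) :
  count (fun x => (lo <= x) && (x < hi))%N (iota 0 N) = (minn hi N - lo)%N.
Proof.
elim: N => [|N IH]; first by rewrite /= minn0.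
rewrite -addn1 iotaD count_cat IH /= add0n addn0.
case: (leqP hi N) => hN.
  rewrite andbF addn0; lia.
rewrite andbT; case: (leqP lo N) => hl /=; lia.
Qed.

Lemma sum_const_seq (T : Type) (L : seq T) (c : R) : \sum_(x <- L) c = c * (size L)%:R.
Proof.
by rewrite -(count_predT L) -sum_if_count; apply: eq_bigr.
Qed.

Lemma aterm_c t m : aterm alpha Sc t m = if [&& am, (m < a)%N & t == m.+1] then alpha else 0.
Proof.
rewrite /aterm /=; case ma: (m < a)%N.
  case: (eqVneq t m.+1) => [->|ne].
    by rewrite ltnn /= !andbT.
  by rewrite !andbF orbF andbN.
by rewrite andbN /= andbF.
Qed.

Lemma apart_c : \sum_(t <- iota 0 (a + b).+1) \sum_(m <- iota 0 n) aterm alpha Sc t m =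
  if am then a%:R * alpha else 0.
Proof.
have := dn => dn'.
under eq_bigr do under eq_bigr do rewrite aterm_c.
case: am => /=; last by rewrite big1 // => t _; rewrite big1.
rewrite exchange_big /=.
rewrite (eq_bigr (fun m => if (m < a)%N then alpha else 0)); last first.
  move=> m _; case: ifP => ma; last by rewrite big1.
  apply: (@pick_sum (a + b).+1 m.+1 (fun _ => alpha)); lia.
rewrite sum_if_count mulrC; congr (_ * _); congr (_%:R).
rewrite -(eq_count (a1 := fun x => (0 <= x) && (x < a))%N) // count_int; lia.
Qed.


Lemma pick_sum2 (N j : nat) (F : nat -> R) : (j < N)%N -> (forall m, m != j -> F m = 0) ->
  \sum_(m <- iota 0 N) F m = F j.
Proof.
move=> jN h; rewrite (bigD1_seq j) ?iota_uniq ?mem_iota //= big1 ?addr0 //.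
Qed.

Lemma rpart_c : \sum_(t <- iota 0 (a + b)) \sum_(m <- iota 0 n) rterm n s beta csc Sc t m =
  (if am then 0 else (a * d)%:R * beta) + (b * (d - a))%:R * beta.
Proof.
have := dn => dn'.
rewrite iotaD big_cat /=; congr (_ + _).
  rewrite (eq_big_seq (fun _ => if am then 0 else d%:R * beta)); last first.
    move=> t; rewrite mem_iota add0n => /andP[_ ta].
    have tab : (t < a + b)%N by lia.
    rewrite (@pick_sum2 _ (rr csc t)); first last.
    - by move=> m hm; rewrite /rterm (negbTE hm).
    - rewrite rr_c // ta; lia.
    rewrite /rterm eqxx hc_c // rr_c // ta /cluster_members hd mul1n.
    rewrite (eq_big_seq (fun _ => if am then 0 else beta)); last first.
      move=> h; rewrite mem_iota => /andP[h1 h2] /=.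
      have -> : (h < a)%N = false by apply/negbTE; rewrite -leqNgt; lia.
      rewrite ltnn ta eqxx /=.
      have -> : (if (d <= h < d + b)%N then (t <= a + (h - d))%N else true) = true.
        by case: ifP => // _; lia.
      by rewrite andbT; case: am.

    by rewrite sum_const_seq size_iota; case: am; rewrite ?mul0r // mulrC.
  rewrite sum_const_seq size_iota; case: am; rewrite ?mul0r // natrM; ring.
rewrite (eq_big_seq (fun _ => (d - a)%:R * beta)); last first.
  move=> t; rewrite mem_iota add0n => /andP[aT tab].
  rewrite (@pick_sum2 _ (rr csc t)); first last.
  - by move=> m hm; rewrite /rterm (negbTE hm).
  - rewrite rr_c // (_ : (t < a)%N = false); [lia | by rewrite ltnNge aT].
  have ta : (t < a)%N = false by rewrite ltnNge aT.
  rewrite /rterm eqxx hc_c // rr_c // ta /cluster_members hd mul0n.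
  have -> : Sc (InN t.+1 (d + (t - a))) = false.
    rewrite /=.
    have -> : (d + (t - a) < a)%N = false by apply/negbTE; rewrite -leqNgt; lia.
    have -> : (d <= d + (t - a) < d + b)%N by apply/andP; split; lia.
    apply/negbTE; rewrite -ltnNge; lia.
  rewrite (eq_big_seq (fun h => if (a <= h)%N then beta else 0)); last first.
    move=> h; rewrite mem_iota => /andP[_ h2] /=; rewrite andbT.
    case ha: (h < a)%N.
      have -> : (t <= h)%N = false by apply/negbTE; rewrite -ltnNge; lia.
      have -> : (a <= h)%N = false by apply/negbTE; rewrite -ltnNge; lia.
      by [].
    have -> : (d <= h < d + b)%N = false by apply/negbTE; apply/negP => /andP[]; lia.
    by rewrite leqNgt ha.
  rewrite sum_if_count mulrC; congr (_ * _); congr (_%:R).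
  rewrite -(@eq_in_count _ (fun x => (a <= x) && (x < d))%N); last first.
    by move=> x; rewrite mem_iota => /andP[_ h]; rewrite add0n in h; rewrite h andbT.
  by rewrite count_int minnn.
by rewrite sum_const_seq size_iota natrM; ring.
Qed.


Lemma cap_c : cut_capacity n s alpha beta csc cdc Sc =
  (if am then a%:R * alpha else 0) + ((if am then 0 else (a * d)%:R * beta) + (b * (d - a))%:R * beta).
Proof. by rewrite cap_formula size_csc apart_c rpart_c. Qed.

End Con.

Lemma upper (R : realFieldType) (n s : nat) (alpha beta : R) (a b : nat) (am : bool) :
  (2 <= s)%N -> (a <= n %/ s)%N -> (b <= n %/ s)%N -> (0 < n %/ s)%N ->
  (0 < alpha)%R -> (0 < beta)%R ->
  exists sc dc S, [/\ valid_scenario n s sc, valid_dc n (a + b) (size sc) dc,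
    finite_cut n s alpha beta sc dc S &
    cut_capacity n s alpha beta sc dc S =
      ((if am then a%:R * alpha else 0) + ((if am then 0 else (a * (n %/ s))%:R * beta)
        + (b * (n %/ s - a))%:R * beta))%R].
Proof.
move=> s2 ad bd d0 a0 b0.
exists (csc a b (n %/ s)), (cdc a b (n %/ s)), (Sc a b (n %/ s) am); split.
- exact: (@vsc_c R n s alpha beta a b (n %/ s) erefl s2 ad bd d0 a0 b0).
- exact: (@vdc_c R n s alpha beta a b (n %/ s) erefl s2 ad bd d0 a0 b0).
- exact: (@fc_c R n s alpha beta a b (n %/ s) am erefl s2 ad bd d0 a0 b0).
- exact: (@cap_c R n s alpha beta a b (n %/ s) am erefl s2 ad bd d0 a0 b0).
Qed.


End Aux.
Import Aux.

Local Open Scope ring_scope.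

Lemma Fstar_of (R : realFieldType) (n k s : nat) (alpha beta v : R) :
  (forall sc dc S, valid_scenario n s sc -> valid_dc n k (size sc) dc ->
    finite_cut n s alpha beta sc dc S -> v <= cut_capacity n s alpha beta sc dc S) ->
  (exists sc dc S, [/\ valid_scenario n s sc, valid_dc n k (size sc) dc,
    finite_cut n s alpha beta sc dc S & cut_capacity n s alpha beta sc dc S = v]) ->
  is_Fstar n k s alpha beta v.
Proof.
move=> LB [sc [dc [S [vs vd fS cS]]]]; split.
  exists sc, dc; split; [done | split; [done | split]].
    by exists S.
  by move=> S' fS'; apply: LB.
move=> sc' dc' w vs' vd' [[S' [fS' <-]] _].
exact: LB.
Qed.

Theorem lemma3 (R : realFieldType) (n k s : nat) (alpha beta : R) :
  (0 < n)%N -> (0 < k)%N -> (2 <= s)%N -> (s <= n %/ k)%N ->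
  0 < alpha -> 0 < beta ->
  let d := (n %/ s)%N in
  [/\ ((d%:R <= alpha / beta) ->
        is_Fstar n k s alpha beta
          ((k * d)%:R * beta - ((k./2) * uphalf k)%:R * beta)),
      (forall k1 : nat, (uphalf k <= k1 <= k)%N ->
        d%:R + k%:R - 2 * k1%:R - 1 <= alpha / beta ->
        alpha / beta < Num.min (d%:R + k%:R - 2 * k1%:R + 1) d%:R ->
        is_Fstar n k s alpha beta
          (k1%:R * alpha + (d%:R - k1%:R) * (k%:R - k1%:R) * beta)) &
      (alpha / beta < d%:R - k%:R - 1 ->
        is_Fstar n k s alpha beta (k%:R * alpha))].
Proof.
move=> n0 k0 s2 skn a0 b0 d.
have s0 : (0 < s)%N by apply: leq_trans s2.
have kd : (k <= d)%N.
  rewrite /d leq_divRL // mulnC -leq_divRL //.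
have d0 : (0 < d)%N by apply: leq_trans kd.
have bne : beta != 0 by rewrite gt_eqF.
have eab : beta * (alpha / beta) = alpha by rewrite mulrC divfK.
split.
- move=> hr; apply: Fstar_of.
    apply: lower_bound => // T A tau cl c cA ccl.
    have := @comb1 R T A tau cl c (alpha / beta) d ccl hr; rewrite cA => h.
    rewrite -mulrBl mulrC; apply: ler_wpM2l; [exact: ltW | exact: h].
  have kk : (k./2 + uphalf k)%N = k.
    by rewrite uphalf_half addnC -addnA addnn odd_double_half.
  have h1 : (k./2 <= d)%N by lia.
  have h2 : (uphalf k <= d)%N by lia.
  have [sc [dc [S [vs vd fS cS]]]] := @upper R n s alpha beta k./2 (uphalf k) false s2
     h1 h2 d0 a0 b0.
  exists sc, dc, S; split => //; first by rewrite -kk.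
  rewrite cS /= add0r -/d.
  have e : ((k./2 * d) + (uphalf k * (d - k./2)) + k./2 * uphalf k = k * d)%N.
    have e1 : (uphalf k * (d - k./2) + uphalf k * k./2 = uphalf k * d)%N by rewrite -mulnDr subnK.
    rewrite -[in RHS]kk mulnDl [(k./2 * uphalf k)%N]mulnC; lia.
  rewrite -e !natrD; ring.
- move=> k1 hk1 lo hi; apply: Fstar_of.
    apply: lower_bound => // T A tau cl c cA ccl.
    have := @comb2 R T A tau cl c (alpha / beta) d ccl k1; rewrite cA => /(_ hk1 lo hi) h.
    have -> : k1%:R * alpha + (d%:R - k1%:R) * (k%:R - k1%:R) * beta =
      beta * (k1%:R * (alpha / beta) + (d%:R - k1%:R) * (k%:R - k1%:R)).
      by rewrite -{1}eab; ring.
    apply: ler_wpM2l; [exact: ltW | exact: h].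
  case/andP: hk1 => _ k1k.
  have h1 : (k1 <= d)%N by lia.
  have h2 : (k - k1 <= d)%N by lia.
  have [sc [dc [S [vs vd fS cS]]]] := @upper R n s alpha beta k1 (k - k1) true s2
     h1 h2 d0 a0 b0.
  exists sc, dc, S; split => //; first by rewrite subnKC in vd.
  rewrite cS /= add0r -/d natrM !natrB //; ring.
- move=> hr; apply: Fstar_of.
    apply: lower_bound => // T A tau cl c cA ccl.
    have := @comb3 R T A tau cl c (alpha / beta) d; rewrite cA => /(_ hr) h.
    have -> : k%:R * alpha = beta * (k%:R * (alpha / beta)) by rewrite -{1}eab; ring.
    apply: ler_wpM2l; [exact: ltW | exact: h].
  have [sc [dc [S [vs vd fS cS]]]] := @upper R n s alpha beta k 0 true s2
     kd (leq0n d) d0 a0 b0.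
  exists sc, dc, S; split => //; first by rewrite addn0 in vd.
  by rewrite cS /= mul0n add0r mul0r addr0.
Qed.
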